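(* For every model class $\mathcal M\subseteq\mathcal M^+$, every $\bar M\in\mathcal M^+$ and every $\varepsilon>0$, $$\mathrm{dec}^{\mathrm c}_{\mathrm{pac},\varepsilon}(\mathcal M\cup\{\bar M\},\bar M)\le\mathrm{dec}^{\mathrm c}_{\mathrm{pac},\sqrt3\varepsilon}(\mathcal M,\bar M)+4\varepsilon.$$
   Context: Models are kernels $M:\Pi\to\Delta([0,1]\times\mathcal O)$ (rewards in $[0,1]$); $\mathcal M^+$ is the set of all models. $f^M(\pi)=\mathbb E_{(r,o)\sim M(\pi)}[r]$, $\pi_M\in\arg\max f^M$, $g^M(\pi)=f^M(\pi_M)-f^M(\pi)$; $D^2_H$ is squared Hellinger distance. Constrained PAC DEC: $\mathrm{dec}^{\mathrm c}_{\mathrm{pac},\varepsilon}(\mathcal M',\bar M)=\inf_{p,q\in\Delta(\Pi)}\sup_{M\in\mathcal M'}\{\mathbb E_{\pi\sim p}[g^M(\pi)]:\mathbb E_{\pi\sim q}[D^2_H(M(\pi),\bar M(\pi))]\le\varepsilon^2\}$ (value $0$ if no $M$ satisfies the constraint). *)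

(* Defs.v *)
From HB Require Import structures.
From mathcomp Require Import all_boot all_order all_algebra.
From mathcomp Require Import all_classical all_reals all_analysis.
Set Implicit Arguments. Unset Strict Implicit. Unset Printing Implicit Defensive.
Import Order.TTheory GRing.Theory Num.Theory.
Local Open Scope classical_set_scope.
Local Open Scope ring_scope.
Local Open Scope ereal_scope.

(* Squared Hellinger distance between two probability measures P, Q on a
   measurable space Z (convention without the factor 1/2):
     D_H^2(P,Q) = \int (sqrt (dP/dnu) - sqrt (dQ/dnu))^2 dnu
   for any measure nu dominating P and Q with densities p, q.  The value does
   not depend on the choice of (nu,p,q); we take the infimum over all choices. *)
Definition hellinger2 {d} {Z : measurableType d} {R : realType}
  (P Q : {measure set Z -> \bar R}) : \bar R :=
  ereal_inf [set v | exists (nu : {measure set Z -> \bar R}) (p q : Z -> R),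
    [/\ measurable_fun setT p /\ measurable_fun setT q,
        (forall z, 0 <= p z)%R /\ (forall z, 0 <= q z)%R,
        (forall A, measurable A -> P A = \int[nu]_(z in A) (p z)%:E),
        (forall A, measurable A -> Q A = \int[nu]_(z in A) (q z)%:E) &
        v = \int[nu]_z ((Num.sqrt (p z) - Num.sqrt (q z)) ^+ 2)%:E]].

Section Models.
Context {R : realType} {dP dO : measure_display}
  {Pi : measurableType dP} {O : measurableType dO}.

(* A model: a probability kernel from decisions to (reward, observation). *)
Definition model := R.-pker Pi ~> (R * O)%type.

(* The class M^+ of all models: rewards lie in [0,1] almost surely. *)
Definition is_model (M : model) : Prop :=
  forall pi, M pi (`[0%R, 1%R] `*` setT) = 1.

Definition fM (M : model) (pi : Pi) : \bar R :=
  \int[M pi]_z (z.1)%:E.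

Definition gM (M : model) (pi : Pi) : \bar R :=
  ereal_sup (range (fM M)) - fM M pi.

Definition dec_inner (Mc : set model) (Mbar : model) (eps : R)
  (p q : probability Pi R) : \bar R :=
  let S := [set v | exists2 M, Mc M &
              (\int[q]_pi hellinger2 (M pi) (Mbar pi) <= (eps ^+ 2)%:E) /\
              v = \int[p]_pi gM M pi] in
  if pselect (S = set0) then 0 else ereal_sup S.

Definition dec_c_pac (eps : R) (Mc : set model) (Mbar : model) : \bar R :=
  ereal_inf [set v | exists p q : probability Pi R, v = dec_inner Mc Mbar eps p q].

End Models.

(* Main.v *)
Require Import Defs.
From HB Require Import structures.
From mathcomp Require Import all_boot all_order all_algebra.
From mathcomp Require Import ring lra.
From mathcomp Require Import all_classical all_reals all_analysis.
From mathcomp Require Import measurable_realfun.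
Set Implicit Arguments. Unset Strict Implicit. Unset Printing Implicit Defensive.
Import Order.TTheory GRing.Theory Num.Theory.
Local Open Scope classical_set_scope.
Local Open Scope ring_scope.
Local Open Scope ereal_scope.
Section generic.
Context d (T : measurableType d) (R : realType).
Import HBNNSimple.

Lemma le_integral_any (mu : {measure set T -> \bar R}) (f g : T -> \bar R) :
  (forall x, 0 <= f x) -> (forall x, f x <= g x) ->
  \int[mu]_x f x <= \int[mu]_x g x.
Proof.
move=> f0 fg.
have g0 x : 0 <= g x by exact: le_trans (f0 x) (fg x).
rewrite !ge0_integralTE//; apply: le_ereal_sup => _ [h hf <-].
by exists h => // x; exact: le_trans (hf x) (fg x).
Qed.

Lemma le_measure_integral_any (m1 m2 : {measure set T -> \bar R})
  (m12 : forall S, measurable S -> m1 S <= m2 S) (f : T -> \bar R) :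
  (forall x, 0 <= f x) -> \int[m1]_x f x <= \int[m2]_x f x.
Proof.
move=> f0; rewrite !ge0_integralTE //= ge_ereal_sup// => _ [h/= hfS] <-.
by apply: le_ereal_sup_tmp; exists (sintegral m2 h);
  [exists h|exact: le_measure_sintegral].
Qed.

Lemma density_integralE (P nu : {measure set T -> \bar R}) (p : T -> R) :
  measurable_fun setT p -> (forall z, 0 <= p z)%R ->
  (forall A, measurable A -> P A = \int[nu]_(z in A) (p z)%:E) ->
  forall f : T -> \bar R, (forall x, 0 <= f x) -> measurable_fun setT f ->
  \int[P]_x f x = \int[nu]_x (f x * (p x)%:E).
Proof.
move=> mp p0 Pp f f0 mf; set g := fun x => (p x)%:E.
have mg : measurable_fun setT g by exact/measurable_EFinP.
have mE : measurable (setT : set T) by [].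
pose h := nnsfun_approx mE mf.
have -> : \int[P]_x f x =
    lim (\int[P]_x (EFin \o h n) x @[n --> \oo]).
  have fE x : f x = lim ((EFin \o h n) x @[n --> \oo]).
    by apply/esym/cvg_lim => //; apply: cvg_nnsfun_approx => //.
  under eq_integral => x _ do rewrite fE.
  apply: monotone_convergence => //.
  - move=> n; apply/measurable_EFinP.
    by apply: (measurable_funS measurableT) => //; exact/measurable_funP.
  - by move=> n x Ex //=; rewrite lee_fin.
  - by move=> x Ex a b ab; rewrite lee_fin; exact/lefP/nd_nnsfun_approx.
have -> : \int[nu]_x (f x * g x) =
    lim (\int[nu]_x ((EFin \o h n) \* g) x @[n --> \oo]).
  have fg x : f x * g x = lim (((EFin \o h n) \* g) x @[n --> \oo]).
    by apply/esym/cvg_lim => //; apply: cvgeZr;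
      [by []|exact: cvg_nnsfun_approx].
  under eq_integral => x _ do rewrite fg.
  apply: monotone_convergence => [//| | |].
  - move=> n; apply/emeasurable_funM => //.
    exact/measurable_EFinP.
  - by move=> n x Ex /=; rewrite mule_ge0 ?lee_fin.
  - by move=> x Ex a b ab/=; rewrite lee_wpmul2r ?lee_fin//; exact/lefP/nd_nnsfun_approx.
suff suf n : \int[nu]_x ((EFin \o h n) x * g x) =
    \int[P]_x (EFin \o h n) x.
  by apply/esym; under eq_fun do rewrite suf.
transitivity (\int[P]_x
   (\sum_(y \in range (h n)) (y * \1_(h n @^-1` [set y]) x)%:E)); last first.
  by apply: eq_integral => t tE; rewrite /= fimfunE -fsumEFin.
have indich m r : measurable_fun setT (fun x => (r * \1_(h m @^-1` [set r]) x)%:E).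
  by apply: (measurable_comp measurableT) => //; exact: measurable_funM.
rewrite ge0_integral_fsum//; last by move=> m y Ey; exact: nnfun_muleindic_ge0.
transitivity (\int[nu]_x (\sum_(y \in range (h n))
    (y * \1_(h n @^-1` [set y]) x)%:E * g x)).
  under [RHS]eq_integral => x xE.
    rewrite -ge0_mule_fsuml => [|y]; last exact: nnfun_muleindic_ge0.
    rewrite fsumEFin // -(fimfunE _ x); over.
  by [].
rewrite ge0_integral_fsum//; last 2 first.
  - move=> y; apply: emeasurable_funM => //.
  - by move=> m y Ey; rewrite mule_ge0 ?lee_fin// -lee_fin nnfun_muleindic_ge0.
apply: eq_fsbigr => r rhn.
under [RHS]eq_integral do rewrite EFinM.
rewrite integralZl_indic_nnsfun => //.
under eq_integral do rewrite EFinM -muleA.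
rewrite ge0_integralZl//.
- under eq_integral do rewrite muleC.
  rewrite (eq_integral (g \_ (h n @^-1` [set r]))); last first.
    by move=> x xE; rewrite epatch_indic.
  by rewrite -integral_mkcondr setTI -Pp// integral_indic// setIT.
- apply: emeasurable_funM => //; exact/measurable_EFinP.
- by move=> t Et; rewrite mule_ge0 ?lee_fin.
- by move: rhn; rewrite inE => -[t _ <-]; rewrite lee_fin.
Qed.

End generic.

Local Open Scope ring_scope.
Section reals.
Context (R : realType).

Lemma ptwise (u v w t : R) : 0 <= u -> 0 <= v -> 0 <= w <= 1 -> 0 < t ->
  w * u^+2 + v^+2 / 2 <= w * v^+2 + u^+2 / 2 + t / 2 * (u - v)^+2 + (u^+2 + v^+2) / (4 * t).
Proof.
move=> u0 v0 /andP[w0 w1] t0.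
rewrite -(ler_pM2l t0).
have -> : t * (w * v^+2 + u^+2 / 2 + t / 2 * (u - v)^+2 + (u^+2 + v^+2) / (4 * t))
  = t * (w * v^+2 + u^+2 / 2 + t / 2 * (u - v)^+2) + (u^+2 + v^+2) / 4.
  by field; rewrite gt_eqF.
have H1 : 0 <= (t * (u - v) + (1/2 - w) * (u + v))^+2 by exact: sqr_ge0.
have H2 : 0 <= (u + v)^+2 * (1 - 4 * (1/2 - w)^+2).
  apply: mulr_ge0; first exact: sqr_ge0.
  nra.
have H3 : 0 <= (u - v)^+2 by exact: sqr_ge0.
nra.
Qed.

Lemma sq_bound (x dd : R) : 0 <= dd ->
  (forall t, 0 < t -> x <= t / 2 * dd + 1 / (2 * t)) ->
  (forall t, 0 < t -> - x <= t / 2 * dd + 1 / (2 * t)) -> x ^+ 2 <= dd.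
Proof.
move=> d0 H1 H2; apply/ler_addgt0Pr => e e0.
set s := Num.sqrt (dd + e).
have s0 : 0 < s by rewrite sqrtr_gt0; lra.
have ss : s ^+ 2 = dd + e by rewrite sqr_sqrtr //; lra.
have si : s * s^-1 = 1 by rewrite mulfV ?gt_eqF.
have si0 : 0 < s^-1 by rewrite invr_gt0.
have k : s^-1 / 2 * dd + 1 / (2 * s^-1) <= s.
  have -> : s^-1 / 2 * dd + 1 / (2 * s^-1) = (dd / s^+2 + 1) * s / 2.
    by field; rewrite gt_eqF.
  have : dd / s^+2 <= 1 by rewrite ler_pdivrMr ?exprn_gt0 // mul1r; lra.
  nra.
have := H1 _ si0; have := H2 _ si0.
move=> a b; have xa : x <= s by lra.
have xb : - x <= s by lra.
rewrite -ss; nra.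
Qed.
End reals.
Local Open Scope ereal_scope.
Section lin.
Context d (T : measurableType d) (R : realType).
Variable mu : {measure set T -> \bar R}.

Lemma intD (f g : T -> R) : measurable_fun setT f -> measurable_fun setT g ->
  (forall x, 0 <= f x)%R -> (forall x, 0 <= g x)%R ->
  \int[mu]_x (f x + g x)%:E = \int[mu]_x (f x)%:E + \int[mu]_x (g x)%:E.
Proof.
move=> mf mg f0 g0; under eq_integral do rewrite EFinD.
by apply: ge0_integralD => //; [move=> x _; rewrite lee_fin|exact/measurable_EFinP|
  move=> x _; rewrite lee_fin|exact/measurable_EFinP].
Qed.

Lemma intZ (c : R) (f : T -> R) : (0 <= c)%R -> measurable_fun setT f ->
  (forall x, 0 <= f x)%R ->
  \int[mu]_x (c * f x)%:E = c%:E * \int[mu]_x (f x)%:E.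
Proof.
move=> c0 mf f0; under eq_integral do rewrite EFinM.
by apply: ge0_integralZl_EFin => //; [move=> x _; rewrite lee_fin|exact/measurable_EFinP].
Qed.
End lin.

Section hell.
Context (R : realType) (dO : measure_display) (O : measurableType dO).

Definition Sset : set (R * O) := `[0%R, 1%R] `*` setT.
Definition phi (z : R * O) : R := (z.1 * \1_Sset z)%R.

Lemma mSset : measurable Sset.
Proof. exact: measurableX. Qed.

Lemma mphi : measurable_fun setT phi.
Proof. apply: measurable_funM; [exact: measurable_fst|exact: measurable_indic mSset]. Qed.

Lemma phi01 z : (0 <= phi z <= 1)%R.
Proof.
rewrite /phi indicE; case: (boolP (z \in Sset)) => zS; last by rewrite mulr0 lexx ler01.
move: zS; rewrite inE /Sset /= => -[]; rewrite /= in_itv /= => /andP[a b] _.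
by rewrite mulr1 a b.
Qed.

End hell.
Arguments Sset {R dO O}.
Arguments mSset {R dO O}.

Section hell2.
Context (R : realType) (dO : measure_display) (O : measurableType dO).
Local Notation Z := (R * O)%type.

Lemma int_phi_density (P nu : {measure set Z -> \bar R}) (p : Z -> R) :
  measurable_fun setT p -> (forall z, 0 <= p z)%R ->
  (forall A, measurable A -> P A = \int[nu]_(z in A) (p z)%:E) ->
  \int[P]_z (phi z)%:E = \int[nu]_z (phi z * p z)%:E.
Proof.
move=> mp p0 Pp; rewrite (density_integralE mp p0 Pp (f := fun z => (phi z)%:E)).
- by apply: eq_integral => z _; rewrite EFinM.
- by move=> z; rewrite lee_fin; case/andP: (phi01 z).
- by apply/measurable_EFinP; exact: mphi.
Qed.

Lemma int_phi_fin (P : {measure set Z -> \bar R}) (HP : P setT = 1) :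
  0 <= \int[P]_z (phi z)%:E <= 1.
Proof.
apply/andP; split.
  by apply: integral_ge0 => z _; rewrite lee_fin; case/andP: (phi01 z).
apply: (@le_trans _ _ (\int[P]_z (cst 1%R z)%:E)).
  apply: le_integral_any => z; rewrite lee_fin; case/andP: (phi01 z) => //.
by rewrite (_ : (fun z => _) = cst 1%E) // integral_cst //= HP mul1e.
Qed.

Lemma hell_bound (P Q : {measure set Z -> \bar R}) (HP : P setT = 1) (HQ : Q setT = 1) :
  ((fine (\int[P]_z (phi z)%:E) - fine (\int[Q]_z (phi z)%:E))^+2)%R%:E
    <= hellinger2 P Q.
Proof.
apply/ereal_infP => _ [nu [p [q [[mp mq] [p0 q0] Pp Qq ->]]]].
set sp := fun z => Num.sqrt (p z).
set sq := fun z => Num.sqrt (q z).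
have msp : measurable_fun setT sp.
  exact: measurableT_comp (continuous_measurable_fun (@sqrt_continuous R)) mp.
have msq : measurable_fun setT sq.
  exact: measurableT_comp (continuous_measurable_fun (@sqrt_continuous R)) mq.
set D := \int[nu]_z _.
have D0 : 0 <= D by apply: integral_ge0 => z _; rewrite lee_fin sqr_ge0.
have [DE|] := eqVneq D +oo; first by rewrite DE leey.
move=> Dnoo.
have Dfin : D \is a fin_num by rewrite ge0_fin_numE // ltey.
set dd := fine D.
have Ddd : D = dd%:E by rewrite fineK.
have IP := int_phi_density mp p0 Pp.
have IQ := int_phi_density mq q0 Qq.
have P1 : \int[nu]_z (p z)%:E = 1 by rewrite -Pp //; exact: HP.
have Q1 : \int[nu]_z (q z)%:E = 1 by rewrite -Qq //; exact: HQ.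
have /andP[aP0 aP1] := int_phi_fin HP.
have /andP[aQ0 aQ1] := int_phi_fin HQ.
have aPf : \int[P]_z (phi z)%:E \is a fin_num by rewrite ge0_fin_numE // (le_lt_trans aP1) // ltey.
have aQf : \int[Q]_z (phi z)%:E \is a fin_num by rewrite ge0_fin_numE // (le_lt_trans aQ1) // ltey.
set a := fine (\int[P]_z (phi z)%:E).
set b := fine (\int[Q]_z (phi z)%:E).
have aE : \int[nu]_z (phi z * p z)%:E = a%:E by rewrite -IP /a fineK.
have bE : \int[nu]_z (phi z * q z)%:E = b%:E by rewrite -IQ /b fineK.
have phi0 z : (0 <= phi z)%R by case/andP: (phi01 z).
have mphip : measurable_fun setT (fun z => phi z * p z)%R by apply: measurable_funM; [exact: mphi|exact: mp].
have mphiq : measurable_fun setT (fun z => phi z * q z)%R by apply: measurable_funM; [exact: mphi|exact: mq].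
have mdd : measurable_fun setT (fun z => (sp z - sq z) ^+ 2)%R.
  by apply: measurable_funX; exact: measurable_funB.
have key (u v : Z -> R) (pu : forall A, measurable A -> P A = \int[nu]_(z in A) (u z)%:E) : True by [].
have side : forall (u v : Z -> R) (au bu : R) (mu_ : measurable_fun setT u) (mv : measurable_fun setT v)
    (u0 : forall z, (0 <= u z)%R) (v0 : forall z, (0 <= v z)%R)
    (U1 : \int[nu]_z (u z)%:E = 1) (V1 : \int[nu]_z (v z)%:E = 1)
    (Au : \int[nu]_z (phi z * u z)%:E = au%:E) (Bv : \int[nu]_z (phi z * v z)%:E = bu%:E)
    (DD : \int[nu]_z ((Num.sqrt (u z) - Num.sqrt (v z)) ^+ 2)%:E = dd%:E),
    forall t, (0 < t)%R -> (au - bu <= t / 2 * dd + 1 / (2 * t))%R.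
  move=> u v au bu mu_ mv u0 v0 U1 V1 Au Bv DD t t0.
  have msu : measurable_fun setT (fun z => Num.sqrt (u z)).
    exact: measurableT_comp (continuous_measurable_fun (@sqrt_continuous R)) mu_.
  have msv : measurable_fun setT (fun z => Num.sqrt (v z)).
    exact: measurableT_comp (continuous_measurable_fun (@sqrt_continuous R)) mv.
  have mphiu : measurable_fun setT (fun z => phi z * u z)%R by apply: measurable_funM; [exact: mphi|exact: mu_].
  have mphiv : measurable_fun setT (fun z => phi z * v z)%R by apply: measurable_funM; [exact: mphi|exact: mv].
  have msq2 : measurable_fun setT (fun z => (Num.sqrt (u z) - Num.sqrt (v z)) ^+ 2)%R.
    by apply: measurable_funX; exact: measurable_funB.
  have pt z : (phi z * u z + 2^-1 * v z <=
     (phi z * v z + 2^-1 * u z) +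
     (t / 2 * (Num.sqrt (u z) - Num.sqrt (v z)) ^+ 2 + (4 * t)^-1 * (u z + v z)))%R.
    have := @ptwise _ (Num.sqrt (u z)) (Num.sqrt (v z)) (phi z) t (sqrtr_ge0 _) (sqrtr_ge0 _) (phi01 z) t0.
    rewrite !sqr_sqrtr //; lra.
  have I : \int[nu]_z (phi z * u z + 2^-1 * v z)%:E <=
     \int[nu]_z ((phi z * v z + 2^-1 * u z) +
     (t / 2 * (Num.sqrt (u z) - Num.sqrt (v z)) ^+ 2 + (4 * t)^-1 * (u z + v z)))%:E.
    apply: le_integral_any => z; rewrite lee_fin.
      2: exact: pt.
    by case/andP: (phi01 z) => ? _; apply: addr_ge0; apply: mulr_ge0 => //; rewrite invr_ge0.
  have t2 : (0 <= t / 2)%R by apply: divr_ge0 => //; exact: ltW.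
  have t4 : (0 <= (4 * t)^-1)%R by rewrite invr_ge0 mulr_ge0 // ltW.
  have h2 : (0 <= 2^-1 :> R)%R by rewrite invr_ge0.
  rewrite intD ?intZ ?intD ?intZ ?intD ?intZ ?intD in I; last first.
  all: try (match goal with |- forall _, _ => intro end).
  all: try solve [repeat first [assumption | exact: measurable_cst | exact: mphi | exact: sqr_ge0 | exact: u0 | exact: v0 | exact: phi0 | apply: measurable_funD | apply: measurable_funB | apply: measurable_funM | apply: measurable_funX | apply: addr_ge0 | apply: mulr_ge0]].
  rewrite Au Bv U1 V1 DD -!EFinM -!EFinD lee_fin in I.
  have e : ((4 * t)^-1 * (1 + 1) = 1 / (2 * t))%R by field; rewrite gt_eqF.
  lra.
have DD1 : \int[nu]_z ((Num.sqrt (p z) - Num.sqrt (q z)) ^+ 2)%:E = dd%:E by rewrite -Ddd.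
have DD2 : \int[nu]_z ((Num.sqrt (q z) - Num.sqrt (p z)) ^+ 2)%:E = dd%:E.
  by rewrite -DD1; apply: eq_integral => z _; rewrite -sqrrN opprB.
rewrite Ddd lee_fin; apply: sq_bound.
- by rewrite -lee_fin -Ddd.
- by move=> t t0; exact: (side p q a b mp mq p0 q0 P1 Q1 aE bE DD1 t t0).
- move=> t t0; rewrite opprB; exact: (side q p b a mq mp q0 p0 Q1 P1 bE aE DD2 t t0).
Qed.
End hell2.

Section mix.
Context {R : realType} {dP : measure_display} {Pi : measurableType dP}.

Definition mix (q p : probability Pi R) (a : Pi) : probability Pi R :=
  mnormalize (measure_add (measure_add q p) \d_a) q.

Lemma third_ge0 : (0 <= (3:R)^-1)%R. Proof. by rewrite invr_ge0. Qed.
Definition third : {nonneg R} := NngNum third_ge0.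

Lemma mnormE d (T : measurableType d) (mu : {measure set T -> \bar R})
  (P : probability T R) (c : R) : mu [set: T] = c%:E -> (0 < c)%R ->
  forall A, mnormalize mu P A = mu A * (c^-1)%:E.
Proof.
move=> muc c0 A; rewrite /mnormalize muc /= eqe gt_eqF //=.
Qed.

Lemma mixE (q p : probability Pi R) (a : Pi) :
  (mix q p a : set Pi -> \bar R) = mscale third (measure_add (measure_add q p) \d_a).
Proof.
apply/funext => A.
transitivity (mnormalize (measure_add (measure_add q p) \d_a) q A) => //.
rewrite (@mnormE _ _ _ _ 3) //; first by rewrite /mscale muleC.
apply: (eq_trans (measure_addE _ _ _)).
have q2 : measure_add q p [set: Pi] = 2%:E.
  apply: (eq_trans (measure_addE _ _ _)).
  apply: (eq_trans (f_equal2 (fun x y => x + y) (probability_setT q) (probability_setT p))).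
  by rewrite -EFinD.
apply: (eq_trans (f_equal2 (fun x y => x + y) q2 (erefl (\d_a [set: Pi])))).
rewrite diracE (_ : a \in _ = true); last by rewrite in_setT.
by rewrite -EFinD -natrD.
Qed.



Lemma mix_int (q p : probability Pi R) (a : Pi) (f : Pi -> \bar R) :
  (forall x, 0 <= f x) -> measurable_fun setT f ->
  \int[mix q p a]_x f x = third%:num%:E * (\int[q]_x f x + \int[p]_x f x + f a).
Proof.
move=> f0 mf; rewrite mixE ge0_integral_mscale //; congr (_ * _).
rewrite !ge0_integral_measure_add // integral_dirac //.
by rewrite diracE in_setT mul1e.
Qed.

Import HBNNSimple.

Lemma mix_le (q p : probability Pi R) (a : Pi) (h : Pi -> \bar R) :
  (forall x, 0 <= h x) -> \int[q]_x h x <= 3%:E * \int[mix q p a]_x h x.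
Proof.
move=> h0; rewrite [X in X <= _]ge0_integralTE //.
apply: ge_ereal_sup => _ [g gh <-].
rewrite -integralT_nnsfun.
have g0 x : 0 <= (g x)%:E by rewrite lee_fin.
have mg : measurable_fun setT (fun x => (g x)%:E) by exact/measurable_EFinP.
apply: (@le_trans _ _ (3%:E * \int[mix q p a]_x (g x)%:E)).
  rewrite mix_int // muleA /= -EFinM mulfV ?pnatr_eq0 // mul1e.
  rewrite -addeA leeDl // adde_ge0 //; exact: integral_ge0.
by apply: lee_wpmul2l => //; exact: le_integral_any.
Qed.
End mix.

Section models.
Context {R : realType} {dP dO : measure_display}
  {Pi : measurableType dP} {O : measurableType dO}.
Local Notation mdl := (@model R dP dO Pi O).

Definition fr (M : mdl) (pi : Pi) : R := fine (\int[M pi]_z (phi z)%:E).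

Lemma frE (M : mdl) pi : (fr M pi)%:E = \int[M pi]_z (phi z)%:E.
Proof.
have /andP[h0 h1] := int_phi_fin (prob_kernel (s:=M) pi).
by rewrite /fr fineK // ge0_fin_numE // (le_lt_trans h1) // ltey.
Qed.

Lemma fr01 (M : mdl) pi : (0 <= fr M pi <= 1)%R.
Proof.
have /andP[h0 h1] := int_phi_fin (prob_kernel (s:=M) pi).
by rewrite -!lee_fin frE h0 h1.
Qed.

Lemma mfr (M : mdl) : measurable_fun setT (fr M).
Proof.
have mI : measurable_fun setT (fun pi => \int[M pi]_z (phi z)%:E).
  apply: (measurable_fun_integral_kernel (l := M)).
  - exact: measurable_kernel.
  - by move=> z; rewrite lee_fin; case/andP: (phi01 z).
  - by apply/measurable_EFinP; exact: mphi.
exact: measurableT_comp (fine_measurable measurableT) mI.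
Qed.

Lemma fM_phi (M : mdl) : is_model M -> forall pi, fM M pi = (fr M pi)%:E.
Proof.
move=> HM pi; rewrite frE /fM.
have HS : M pi Sset = 1 := HM pi.
have H1 := prob_kernel (s:=M) pi.
apply: ae_eq_integral => //.
- apply/measurable_EFinP; exact: measurable_fst.
- apply/measurable_EFinP; exact: mphi.
- exists (~` Sset); split.
  + exact: measurableC mSset.
  + have := measureU (M pi) mSset (measurableC mSset) (setICr Sset).
    rewrite setUCr => E.
    have {E} := eq_trans (esym H1) E => E.
    have {E} := eq_trans E (f_equal (fun x => x + M pi (~` Sset)) HS) => E.
    have fin : M pi (~` Sset) \is a fin_num.
      rewrite ge0_fin_numE //; apply: (@le_lt_trans _ _ (1 + M pi (~` Sset))).
        by rewrite leeDr.
      by rewrite -E ltey.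
    by rewrite -(addeK (x:=1) (M pi (~` Sset))) // (addeC (M pi _)) -E subee.
  + move=> z /= nz zS; apply: nz => _.
    by rewrite /phi indicE (mem_set zS) mulr1.
Qed.

Definition sr (M : mdl) : R := fine (ereal_sup (range (fM M))).

Lemma sup_props (M : mdl) (HM : is_model M) (a : Pi) :
  ereal_sup (range (fM M)) = (sr M)%:E /\ (forall pi, fr M pi <= sr M)%R /\
  (forall pi, gM M pi = (sr M - fr M pi)%:E).
Proof.
have fMr := fM_phi HM.
have ub : ereal_sup (range (fM M)) <= 1.
  by apply: ge_ereal_sup => _ [pi _ <-]; rewrite fMr lee_fin; case/andP: (fr01 M pi).
have lb : 0 <= ereal_sup (range (fM M)).
  apply: (@le_trans _ _ (fM M a)); last by apply: ereal_sup_ubound; exists a.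
  by rewrite fMr lee_fin; case/andP: (fr01 M a).
have sE : ereal_sup (range (fM M)) = (sr M)%:E.
  by rewrite /sr fineK // ge0_fin_numE // (le_lt_trans ub) // ltey.
have frs pi : (fr M pi <= sr M)%R.
  by rewrite -lee_fin -sE -fMr; apply: ereal_sup_ubound; exists pi.
split => //; split => // pi.
by rewrite /gM sE fMr -EFinB.
Qed.

Lemma dec_inner_ub (Mc : set mdl) (Mbar : mdl) (e : R) (p q : probability Pi R) (X : \bar R) :
  (forall M, Mc M -> \int[q]_pi hellinger2 (M pi) (Mbar pi) <= (e ^+ 2)%:E ->
     \int[p]_pi gM M pi <= X) -> 0 <= X -> dec_inner Mc Mbar e p q <= X.
Proof.
move=> H X0; rewrite /dec_inner /=; destruct (pselect _) as [E|E]; first by [].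
by apply: ge_ereal_sup => _ [M HM [Hc ->]]; exact: H.
Qed.

Lemma dec_inner_lb (Mc : set mdl) (Mbar : mdl) (e : R) (p q : probability Pi R) (M : mdl) :
  Mc M -> \int[q]_pi hellinger2 (M pi) (Mbar pi) <= (e ^+ 2)%:E ->
  \int[p]_pi gM M pi <= dec_inner Mc Mbar e p q.
Proof.
move=> HM Hc; rewrite /dec_inner /=; destruct (pselect _) as [E|E].
  exfalso.
  have H : [set v | exists2 M, Mc M & (\int[q]_pi hellinger2 (M pi) (Mbar pi) <= (e ^+ 2)%:E) /\
              v = \int[p]_pi gM M pi] (\int[p]_pi gM M pi) by exists M.
  by rewrite E in H.
by apply: ereal_sup_ubound; exists M.
Qed.

Lemma dec_inner_ge0 (Mc : set mdl) (Mbar : mdl) (e : R) (p q : probability Pi R) :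
  (forall M, Mc M -> is_model M) -> 0 <= dec_inner Mc Mbar e p q.
Proof.
move=> Hm; rewrite /dec_inner /=; destruct (pselect _) as [E|E]; first by [].
have /set0P [v Sv] : [set v | exists2 M, Mc M & (\int[q]_pi hellinger2 (M pi) (Mbar pi) <= (e ^+ 2)%:E) /\
              v = \int[p]_pi gM M pi] != set0 by apply/eqP.
apply: (@le_trans _ _ v); last exact: ereal_sup_ubound.
case: Sv => M HM [_ ->].
apply: integral_ge0 => pi _.
have [_ [frs ->]] := sup_props (Hm _ HM) pi.
by rewrite lee_fin subr_ge0.
Qed.

Lemma amgm (x e : R) : (0 < e)%R -> (x <= x ^+ 2 / (4 * e) + e)%R.
Proof.
move=> e0; rewrite -subr_ge0.
have -> : (x ^+ 2 / (4 * e) + e - x = (x - 2 * e) ^+ 2 / (4 * e))%R.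
  by field; rewrite gt_eqF.
by apply: divr_ge0; [exact: sqr_ge0|lra].
Qed.

Lemma keyK (Mbar M0 : mdl) (HMb : is_model Mbar) (HM0 : is_model M0) (eps : R)
  (eps0 : (0 < eps)%R) (p q : probability Pi R) (a : Pi)
  (Ha : (sr Mbar <= fr Mbar a + eps / 2)%R)
  (H0 : \int[mix q p a]_pi hellinger2 (M0 pi) (Mbar pi) <= (eps ^+ 2)%:E) :
  \int[p]_pi gM Mbar pi <= \int[p]_pi gM M0 pi + (4 * eps)%:E.
Proof.
set D := fun pi => (fr M0 pi - fr Mbar pi)%R.
have mD2 : measurable_fun setT (fun pi => D pi ^+ 2)%R.
  by apply: measurable_funX; apply: measurable_funB; exact: mfr.
have mD2E : measurable_fun setT (fun pi => (D pi ^+ 2)%:E) by exact/measurable_EFinP.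
have D20 pi : 0 <= (D pi ^+ 2)%:E by rewrite lee_fin sqr_ge0.
have D21 pi : (D pi ^+ 2 <= 1)%R.
  by rewrite /D; case/andP: (fr01 M0 pi); case/andP: (fr01 Mbar pi) => *; nra.
have hb pi : (D pi ^+ 2)%:E <= hellinger2 (M0 pi) (Mbar pi).
  exact: hell_bound (prob_kernel (s:=M0) pi) (prob_kernel (s:=Mbar) pi).
have I1 : \int[mix q p a]_pi (D pi ^+ 2)%:E <= (eps ^+ 2)%:E.
  by apply: le_trans H0; apply: le_integral_any.
rewrite mix_int // in I1.
have finI (P : probability Pi R) : \int[P]_pi (D pi ^+ 2)%:E \is a fin_num.
  rewrite ge0_fin_numE; last exact: integral_ge0.
  apply: (@le_lt_trans _ _ (\int[P]_pi (cst 1%R pi)%:E)).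
    by apply: le_integral_any => // pi; rewrite lee_fin.
  by rewrite (_ : (fun pi => _) = cst 1%E) // integral_cst //= probability_setT mul1e ltey.
have Ep := fineK (finI p); have Eq := fineK (finI q).
set ip := fine (\int[p]_pi (D pi ^+ 2)%:E) in Ep.
set iq := fine (\int[q]_pi (D pi ^+ 2)%:E) in Eq.
have ip0 : (0 <= ip)%R by rewrite -lee_fin Ep; exact: integral_ge0.
have iq0 : (0 <= iq)%R by rewrite -lee_fin Eq; exact: integral_ge0.
rewrite -Ep -Eq -!EFinD -EFinM lee_fin /= in I1.
have bip : (ip <= 3 * eps ^+ 2)%R by have := sqr_ge0 (D a); lra.
have bDa : (D a ^+ 2 <= 3 * eps ^+ 2)%R by lra.
have [_ [fr0s g0E]] := sup_props HM0 a.
have [_ [frbs gbE]] := sup_props HMb a.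
set K := ((4 * eps)^-1 * D a ^+ 2 + 5 / 2 * eps)%R.
have pt pi : (sr Mbar - fr Mbar pi <= (sr M0 - fr M0 pi) + (K + (4 * eps)^-1 * D pi ^+ 2))%R.
  have h1 := amgm (- D a) eps0; have h2 := amgm (D pi) eps0.
  rewrite sqrrN in h1.
  have := fr0s a; rewrite /K /D in h1 h2 *.
  lra.
have c0 : (0 <= (4 * eps)^-1)%R by rewrite invr_ge0; lra.
have K0 : (0 <= K)%R by rewrite /K; apply: addr_ge0; [apply: mulr_ge0 => //; exact: sqr_ge0|lra].
have E1 : \int[p]_pi gM Mbar pi = \int[p]_pi (sr Mbar - fr Mbar pi)%:E.
  by apply: eq_integral => pi _; rewrite gbE.
have E2 : \int[p]_pi gM M0 pi = \int[p]_pi (sr M0 - fr M0 pi)%:E.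
  by apply: eq_integral => pi _; rewrite g0E.
rewrite E1 E2.
apply: (@le_trans _ _ (\int[p]_pi ((sr M0 - fr M0 pi) + (K + (4 * eps)^-1 * D pi ^+ 2))%:E)).
  apply: le_integral_any => pi; rewrite lee_fin; last exact: pt.
  by rewrite subr_ge0.
have mfr0 : measurable_fun setT (fun pi => sr M0 - fr M0 pi)%R.
  by apply: measurable_funB => //; exact: mfr.
rewrite intD //; last 3 first.
- by apply: measurable_funD => //; apply: measurable_funM.
- by move=> pi; rewrite subr_ge0.
- by move=> pi; apply: addr_ge0 => //; apply: mulr_ge0 => //; exact: sqr_ge0.
rewrite (@intD _ _ _ p (fun _ => K)) //; last 2 first.
- by apply: measurable_funM.
- by move=> pi; apply: mulr_ge0 => //; exact: sqr_ge0.
rewrite intZ // -Ep.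
rewrite (_ : (fun pi => K%:E) = cst K%:E) // integral_cst //= probability_setT mule1.
apply: leeD2l; rewrite -EFinM -EFinD lee_fin.
have h1 : ((4 * eps)^-1 * D a ^+ 2 <= (4 * eps)^-1 * (3 * eps ^+ 2))%R by apply: ler_wpM2l.
have h2 : ((4 * eps)^-1 * ip <= (4 * eps)^-1 * (3 * eps ^+ 2))%R by apply: ler_wpM2l.
have h3 : ((4 * eps)^-1 * (3 * eps ^+ 2) = 3 / 4 * eps)%R by field; rewrite gt_eqF.
rewrite /K; lra.
Qed.
End models.

Lemma hel_ge0 {R : realType} {d} {Z : measurableType d} (P Q : {measure set Z -> \bar R}) :
  0 <= hellinger2 P Q.
Proof.
apply/ereal_infP => _ [nu [p [q [_ _ _ _ ->]]]].
by apply: integral_ge0 => z _; rewrite lee_fin sqr_ge0.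
Qed.

Theorem proposition4p10 (R : realType) (dP dO : measure_display)
  (Pi : measurableType dP) (O : measurableType dO)
  (Mc : set (@model R dP dO Pi O)) (Mbar : @model R dP dO Pi O) (eps : R) :
  (forall M, Mc M -> is_model M) -> is_model Mbar -> (0 < eps)%R ->
  dec_c_pac eps (Mc `|` [set Mbar]) Mbar
    <= dec_c_pac (Num.sqrt 3 * eps) Mc Mbar + (4 * eps)%:E.
Proof.
move=> Hmod HMb eps0.
set U := Mc `|` [set Mbar].
suff step : forall p q : probability Pi R, dec_c_pac eps U Mbar <=
    dec_inner Mc Mbar (Num.sqrt 3 * eps) p q + (4 * eps)%:E.
  rewrite -leeBlDr //; apply/ereal_infP => _ [p [q ->]].
  by rewrite leeBlDr //; exact: step.
move=> p q.
have [a0 _] : exists a : Pi, True.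
  apply: contrapT => H.
  have : p setT = 0.
    rewrite (_ : setT = set0) ?measure0 //; apply/seteqP; split => x // _.
    by apply: H; exists x.
  move/(eq_trans (esym (probability_setT p)))/eqP.
  by rewrite onee_eq0.
have [sbE [frbs gbE]] := sup_props HMb a0.
have : (sr Mbar - eps / 2)%:E < ereal_sup (range (fM Mbar)).
  by rewrite sbE lte_fin; lra.
move/ereal_sup_gt => [_ [a _ <-]]; rewrite fM_phi // lte_fin => Ha.
have Ha' : (sr Mbar <= fr Mbar a + eps / 2)%R by lra.
set q' := mix q p a.
have X0 : 0 <= dec_inner Mc Mbar (Num.sqrt 3 * eps) p q.
  exact: dec_inner_ge0.
have e4 : 0 <= (4 * eps)%:E by rewrite lee_fin; lra.
have sq3 : ((Num.sqrt 3 * eps) ^+ 2 = 3 * eps ^+ 2)%R by rewrite exprMn sqr_sqrtr.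
have feas M : Mc M -> \int[q']_pi hellinger2 (M pi) (Mbar pi) <= (eps ^+ 2)%:E ->
    \int[p]_pi gM M pi <= dec_inner Mc Mbar (Num.sqrt 3 * eps) p q.
  move=> HM H; apply: dec_inner_lb => //.
  apply: le_trans (@mix_le _ _ _ q p a (fun pi => hellinger2 (M pi) (Mbar pi)) (fun pi => hel_ge0 _ _)) _.
  rewrite sq3 EFinM; apply: lee_wpmul2l => //.
have [[M0 [HM0 H0]] | nA] := pselect (exists M, Mc M /\
    \int[q']_pi hellinger2 (M pi) (Mbar pi) <= (eps ^+ 2)%:E).
- apply: (@le_trans _ _ (dec_inner U Mbar eps p q')).
    by apply: ereal_inf_lbound; exists p, q'.
  apply: dec_inner_ub; last exact: adde_ge0.
  move=> M [HM | ->] H.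
  + by apply: le_trans (feas M HM H) _; exact: leeDl.
  + apply: le_trans (keyK HMb (Hmod _ HM0) eps0 Ha' H0) _.
    by apply: leeD2r; exact: feas.
- apply: (@le_trans _ _ (dec_inner U Mbar eps \d_a q')).
    by apply: ereal_inf_lbound; exists \d_a, q'.
  apply: dec_inner_ub; last exact: adde_ge0.
  move=> M [HM | ->] H.
  + by exfalso; apply: nA; exists M.
  + have E1 : \int[\d_a]_pi gM Mbar pi = \int[\d_a]_pi (sr Mbar - fr Mbar pi)%:E.
      by apply: eq_integral => pi _; rewrite gbE.
    rewrite E1 integral_dirac //; last first.
      by apply/measurable_EFinP; apply: measurable_funB => //; exact: mfr.
    rewrite diracE in_setT mul1e.
    apply: (@le_trans _ _ (4 * eps)%:E); first by rewrite lee_fin; lra.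
    exact: leeDr.
Qed.
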